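(* Let $n,m$ be positive integers and $\sigma$ a composition of $m$ with $\ell(\sigma)$ parts. The maps $\Phi_\sigma:\Delta(\mathcal{T}_n,m)\to\Gamma(\mathsf{hypo}_{n+\ell(\sigma)-1},\sigma)$, $Q\mapsto\pi_\sigma(Q)$, and $\Gamma(\mathsf{hypo}_{n+\ell(\sigma)-1},\sigma)\to\Delta(\mathcal{T}_n,m)$, $T\mapsto\overline{T}$, are mutually inverse isomorphisms of unlabelled directed graphs.
   Context: A quasi-array of size $m$ is an array $Q$ with cells $(i,j)$, $1\le i\le m$, $1\le j\le m-i+1$, each containing a positive integer $Q_{(i,j)}$, with $Q_{(1,j)}\le Q_{(1,j+1)}$ and $Q_{(i,j)}=Q_{(1,i+j-1)}+i-1$. The $k$-th diagonal is the set of cells with $i+j-1=k$. For $Q$ of size $m$: $D_m$ is always defined and adds $1$ to every entry of the $m$-th diagonal; for $1\le k\le m-1$, $D_k$ is defined iff $Q_{(1,k)}<Q_{(1,k+1)}$, and then adds $1$ to every entry of the $k$-th diagonal. $\mathcal{T}_n$ is the set of quasi-arrays whose first-row rightmost entry is at most $n$. $\Delta(\mathcal{T}_n,m)$ is the directed graph whose vertices are the quasi-arrays of size $m$ in $\mathcal{T}_n$, with an edge $Q\to D_k(Q)$ labelled $k$ whenever $D_k$ is defined on $Q$ and $D_k(Q)\in\mathcal{T}_n$. A quasi-ribbon tableau of shape $\sigma=(\sigma_1,\dots,\sigma_r)$ is a filling with positive integers of the diagram having $\sigma_i$ cells in row $i$, the leftmost cell of row $i+1$ directly below the rightmost cell of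 row $i$, weakly increasing along rows and strictly increasing down columns; its column reading is read column by column left to right, each column bottom to top. Quasi-Kashiwara operator $f_i$ on a word $u$: undefined if $u$ contains a subsequence $(i+1)\,i$ or no letter $i$; otherwise replaces the rightmost $i$ by $i+1$. For $N\ge1$, $\Gamma(\mathsf{hypo}_N,\sigma)$ is the directed graph whose vertices are the quasi-ribbon tableaux of shape $\sigma$ with entries in $\{1,\dots,N\}$ (identified with column readings), with an edge $u\to f_i(u)$ labelled $i$ for $1\le i\le N-1$ whenever $f_i(u)$ is defined. $\pi_\sigma(Q)$ is the quasi-ribbon tableau formed by the cells of $Q$ making up a quasi-ribbon diagram of shape $\sigma$ with first cell $(1,1)$; for a quasi-ribbon tableau $T$ of shape $\sigma$ with $m$ cells, $\overline{T}$ is the unique quasi-array of size $m$ with $\pi_\sigma(\overline{T})=T$. *)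

(* Defs.v *)
From mathcomp Require Import all_boot.
Set Implicit Arguments. Unset Strict Implicit. Unset Printing Implicit Defensive.

(* ---------- Quasi-arrays ----------
   A quasi-array of size m is stored as its list of rows: row i (1-indexed)
   is a list of m-i+1 entries Q_(i,1), ..., Q_(i,m-i+1). *)

Definition qent (Q : seq (seq nat)) (i j : nat) : nat :=
  nth 0 (nth [::] Q i.-1) j.-1.

Definition is_quasi_array (m : nat) (Q : seq (seq nat)) : Prop :=
  [/\ size Q = m,
      (forall i, 1 <= i <= m -> size (nth [::] Q i.-1) = m - i + 1),
      (forall i j, 1 <= i <= m -> 1 <= j <= m - i + 1 -> 0 < qent Q i j),
      (forall j, 1 <= j < m -> qent Q 1 j <= qent Q 1 j.+1) &
      (forall i j, 1 <= i <= m -> 1 <= j <= m - i + 1 ->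
         qent Q i j = qent Q 1 (i + j - 1) + i - 1)].

Definition Dop (k : nat) (Q : seq (seq nat)) : seq (seq nat) :=
  [seq [seq (nth 0 (nth [::] Q i) j) + ((i.+1 + j.+1 - 1) == k)
       | j <- iota 0 (size (nth [::] Q i))]
  | i <- iota 0 (size Q)].

Definition D_defined (m k : nat) (Q : seq (seq nat)) : Prop :=
  1 <= k <= m /\ (k = m \/ (k < m /\ qent Q 1 k < qent Q 1 k.+1)).

Definition Delta_vertex (n m : nat) (Q : seq (seq nat)) : Prop :=
  is_quasi_array m Q /\ qent Q 1 m <= n.

Definition Delta_edge (n m : nat) (Q Q' : seq (seq nat)) : Prop :=
  exists k, D_defined m k Q /\ Dop k Q = Q' /\ Delta_vertex n m Q'.

(* ---------- Quasi-ribbon tableaux ----------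
   A composition sigma is a seq of positive parts; a tableau of shape sigma is
   stored as its list of rows (row r, 0-indexed, has nth 0 sigma r cells).
   Row r starts in (0-indexed) column rowstart sigma r, so that the leftmost
   cell of row r+1 is directly below the rightmost cell of row r. *)

Definition is_composition (m : nat) (sigma : seq nat) : Prop :=
  all (fun x => 0 < x) sigma /\ sumn sigma = m.

Definition rowstart (sigma : seq nat) (r : nat) : nat :=
  sumn [seq x.-1 | x <- take r sigma].

Definition in_diag (sigma : seq nat) (r c : nat) : bool :=
  (r < size sigma) && (rowstart sigma r <= c < rowstart sigma r + nth 0 sigma r).

Definition tval (sigma : seq nat) (T : seq (seq nat)) (r c : nat) : nat :=
  nth 0 (nth [::] T r) (c - rowstart sigma r).

Definition is_qrt (sigma : seq nat) (T : seq (seq nat)) : Prop :=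
  [/\ size T = size sigma,
      (forall r, r < size sigma -> size (nth [::] T r) = nth 0 sigma r),
      (forall r c, in_diag sigma r c -> 0 < tval sigma T r c),
      (forall r c, in_diag sigma r c -> in_diag sigma r c.+1 ->
         tval sigma T r c <= tval sigma T r c.+1) &
      (forall r r' c, r < r' -> in_diag sigma r c -> in_diag sigma r' c ->
         tval sigma T r c < tval sigma T r' c)].

Definition col_reading (sigma : seq nat) (T : seq (seq nat)) : seq nat :=
  flatten [seq [seq tval sigma T r c | r <- rev (iota 0 (size sigma)) & in_diag sigma r c]
          | c <- iota 0 (sumn sigma)].

Definition fop (i : nat) (u : seq nat) : option (seq nat) :=
  if subseq [:: i.+1; i] u || (i \notin u) then None
  else Some (set_nth 0 u (size u - (index i (rev u)).+1) i.+1).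

Definition Gamma_vertex (N : nat) (sigma : seq nat) (T : seq (seq nat)) : Prop :=
  is_qrt sigma T /\ (forall r c, in_diag sigma r c -> tval sigma T r c <= N).

Definition Gamma_edge (N : nat) (sigma : seq nat) (T T' : seq (seq nat)) : Prop :=
  Gamma_vertex N sigma T' /\
  exists i, 1 <= i <= N - 1 /\ fop i (col_reading sigma T) = Some (col_reading sigma T').

(* pi_sigma(Q): the cells of Q forming the ribbon diagram of shape sigma with
   first cell (1,1); diagram row r (0-indexed) lies in row r+1 of Q. *)
Definition pi_sigma (sigma : seq nat) (Q : seq (seq nat)) : seq (seq nat) :=
  [seq [seq qent Q r.+1 (rowstart sigma r + j).+1 | j <- iota 0 (nth 0 sigma r)]
  | r <- iota 0 (size sigma)].

(* Main.v *)
From mathcomp Require Import all_boot zify.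
Require Import Defs.
Set Implicit Arguments. Unset Strict Implicit. Unset Printing Implicit Defensive.

Definition Ssum (s : seq nat) r := sumn (take r s).

Lemma S_succ s r : Ssum s r.+1 = Ssum s r + nth 0 s r.
Proof.
rewrite /Ssum; elim: s r => [|x s IH] [|r] //=; first by rewrite take0 /= !addn0.
by rewrite IH addnA.
Qed.

Lemma rowstartE s r : all (fun x => 0 < x) s ->
  rowstart s r + minn r (size s) = Ssum s r.
Proof.
rewrite /rowstart /Ssum; elim: s r => [|x s IH] [|r] //= /andP [Hx Hs].
rewrite minnSS -IH //; lia.
Qed.

Section Diag.
Variables (m : nat) (sg : seq nat).
Hypothesis Hc : is_composition m sg.

Local Notation l := (size sg).

Lemma nth_pos r : r < l -> 0 < nth 0 sg r.
Proof. by case: Hc => /allP Ha _ Hr; apply: Ha; rewrite mem_nth. Qed.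

Lemma S_grow r r' : r <= r' <= l -> Ssum sg r + (r' - r) <= Ssum sg r'.
Proof.
move=> /andP [H1 H2]; elim: r' H1 H2 => [|r' IH] H1 H2.
  have -> : r = 0 by lia. by rewrite addn0.
case: (ltnP r r'.+1) => H3; last first.
  have -> : r = r'.+1 by lia. by rewrite subnn addn0.
have := IH (ltac:(lia)) (ltac:(lia)); rewrite S_succ.
have := nth_pos (ltac:(lia) : r' < l); lia.
Qed.

Lemma S_l : Ssum sg l = m.
Proof. by rewrite /Ssum take_size; case: Hc. Qed.

Lemma S_over r : l <= r -> Ssum sg r = m.
Proof. by move=> H; rewrite /Ssum take_oversize //; case: Hc. Qed.

Lemma S_mono r r' : r <= r' -> Ssum sg r <= Ssum sg r'.
Proof.
move=> H; case: (leqP r' l) => H'; first by have := S_grow (r := r) (r' := r'); lia.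
rewrite (S_over (ltnW H')).
case: (leqP r l) => H''; first by have := S_grow (r := r) (r' := l); rewrite S_l; lia.
by rewrite S_over //; lia.
Qed.

Lemma rowstart_S r : r <= l -> rowstart sg r + r = Ssum sg r.
Proof. move=> H; case: Hc => Ha _; rewrite -rowstartE //; lia. Qed.

Lemma in_diagE r c : in_diag sg r c ->
  [/\ r < l, Ssum sg r <= r + c, r + c < Ssum sg r.+1, r <= Ssum sg r & Ssum sg r.+1 <= m].
Proof.
move=> /andP [Hr /andP [H1 H2]].
have := rowstart_S (ltnW Hr); have := S_succ sg r.
have := S_grow (r := 0) (r' := r); have := S_mono (r := r.+1) (r' := l); rewrite S_l.
move=> *; split; lia.
Qed.

Lemma in_diagI r c : r < l -> Ssum sg r <= r + c -> r + c < Ssum sg r.+1 -> in_diag sg r c.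
Proof.
move=> Hr H1 H2; rewrite /in_diag Hr /=.
have := rowstart_S (ltnW Hr); have := S_succ sg r; move=> *; apply/andP; split; lia.
Qed.

Lemma diag_lt r c r' c' : in_diag sg r c -> in_diag sg r' c' -> r < r' -> r + c < r' + c'.
Proof.
move=> /in_diagE [? ? ? ? ?] /in_diagE [? ? ? ? ?] H.
have := S_mono (r := r.+1) (r' := r') H; lia.
Qed.

Lemma diag_row_le r c r' c' : in_diag sg r c -> in_diag sg r' c' -> r + c <= r' + c' -> r <= r'.
Proof. move=> H1 H2 H; case: (leqP r r') => // H3; have := diag_lt H2 H1 H3; lia. Qed.

Lemma diag_uniq r c r' c' : in_diag sg r c -> in_diag sg r' c' -> r + c = r' + c' -> r = r' /\ c = c'.
Proof.
move=> H1 H2 H; have := diag_row_le H1 H2 (eq_leq H); have := diag_row_le H2 H1 (eq_leq (esym H)); lia.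
Qed.

Lemma col_le r c r' c' : in_diag sg r c -> in_diag sg r' c' -> r' < r -> c' <= c.
Proof.
move=> /in_diagE [? ? ? ? ?] /in_diagE [? ? ? ? ?] H.
have := S_grow (r := r'.+1) (r' := r); lia.
Qed.

Lemma diag_exists d : d < m -> exists r, r <= d /\ in_diag sg r (d - r).
Proof.
move=> Hd.
suff: forall k r, l - r <= k -> Ssum sg r <= d -> exists r, r <= d /\ in_diag sg r (d - r).
  move=> /(_ l 0); apply; first lia. by rewrite /Ssum take0.
elim=> [|k IH] r Hk HS.
  have := S_mono (r := l) (r' := r) (ltac:(lia)); rewrite S_l; lia.
case: (ltnP r l) => Hr; last by have := S_mono (r := l) (r' := r) Hr; rewrite S_l; lia.
case: (ltnP d (Ssum sg r.+1)) => H.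
  have := S_grow (r := 0) (r' := r) (ltac:(lia)); rewrite /Ssum take0 /= => Hg.
  have Hrd : r <= d by rewrite /Ssum in HS; lia.
  exists r; split => //; apply: in_diagI => //; rewrite subnKC //.
by apply: (IH r.+1) => //; lia.
Qed.

Lemma last_row r c : in_diag sg r c -> r + c = m.-1 -> r = l.-1.
Proof.
move=> /in_diagE [? ? ? ? ?] H; have := S_grow (r := r.+1) (r' := l); rewrite S_l; lia.
Qed.

End Diag.

Definition A (Q : seq (seq nat)) k := qent Q 1 k.

Definition mkQ (m : nat) (a : nat -> nat) : seq (seq nat) :=
  [seq [seq a (i + j).+1 + i | j <- iota 0 (m - i)] | i <- iota 0 m].

Lemma qent_mkQ m a i j : 1 <= i <= m -> 1 <= j <= m - i + 1 ->
  qent (mkQ m a) i j = a (i + j - 1) + i - 1.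
Proof.
move=> Hi Hj; rewrite /qent /mkQ (nth_map 0) ?size_iota; last lia.
rewrite nth_iota; last lia.
rewrite (nth_map 0) ?size_iota; last lia.
rewrite nth_iota; last lia.
have -> : (0 + i.-1 + (0 + j.-1)).+1 = i + j - 1 by lia.
lia.
Qed.

Lemma mkQ_quasi m a : (forall j, 1 <= j <= m -> 0 < a j) ->
  (forall j, 1 <= j < m -> a j <= a j.+1) -> is_quasi_array m (mkQ m a).
Proof.
move=> Hp Hm; split.
- by rewrite size_map size_iota.
- move=> i Hi; rewrite /mkQ (nth_map 0) ?size_iota; last lia.
  rewrite size_map size_iota nth_iota; lia.
- move=> i j Hi Hj; rewrite qent_mkQ //; have := Hp (i + j - 1) (ltac:(lia)); lia.
- move=> j Hj; rewrite !qent_mkQ; try lia.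
  have -> : 1 + j - 1 = j by lia. have -> : 1 + j.+1 - 1 = j.+1 by lia.
  have := Hm j Hj; lia.
- move=> i j Hi Hj; rewrite !qent_mkQ; try lia.
  have -> : 1 + (i + j - 1) - 1 = i + j - 1 by lia.
  by lia.
Qed.

Lemma mkQ_ext m a b : (forall j, 1 <= j <= m -> a j = b j) -> mkQ m a = mkQ m b.
Proof.
move=> H; apply/eq_in_map => i; rewrite mem_iota => Hi.
apply/eq_in_map => j; rewrite mem_iota => Hj; rewrite H //; lia.
Qed.

Lemma quasi_mkQ m Q : is_quasi_array m Q -> Q = mkQ m (A Q).
Proof.
case=> Hs Hr Hp Hm Hf.
apply: (@eq_from_nth _ [::]); first by rewrite size_map size_iota.
move=> i; rewrite Hs => Hi.
rewrite /mkQ (nth_map 0) ?size_iota // nth_iota // add0n.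
apply: (@eq_from_nth _ 0); first by rewrite size_map size_iota (Hr i.+1); lia.
move=> j; rewrite (Hr i.+1); last lia.
move=> Hj; rewrite (nth_map 0) ?size_iota; last lia.
rewrite nth_iota; last lia.
have -> : nth 0 (nth [::] Q i) j = qent Q i.+1 j.+1 by [].
rewrite Hf; try lia. rewrite /A add0n.
have -> : i.+1 + j.+1 - 1 = (i + j).+1 by lia.
lia.
Qed.

Lemma Dop_mkQ m a k : Dop k (mkQ m a) = mkQ m (fun j => a j + (j == k)).
Proof.
rewrite /Dop /mkQ size_map size_iota; apply/eq_in_map => i; rewrite mem_iota => /andP [_ Hi].
rewrite (nth_map 0) ?size_iota // nth_iota // add0n size_map size_iota.
apply/eq_in_map => j; rewrite mem_iota => /andP [_ Hj].
rewrite (nth_map 0) ?size_iota; last lia.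
rewrite nth_iota; last lia.
have -> : i.+1 + j.+1 - 1 = (i + j).+1 by lia.
rewrite add0n; lia.
Qed.

Section Quasi.
Variables (m : nat) (Q : seq (seq nat)).
Hypothesis HQ : is_quasi_array m Q.

Lemma A_pos j : 1 <= j <= m -> 0 < A Q j.
Proof. case: HQ => _ _ Hp _ _ H; apply: Hp; lia. Qed.

Lemma A_mono i j : 1 <= i -> i <= j -> j <= m -> A Q i <= A Q j.
Proof.
case: HQ => _ _ _ Hm _ H1 H2 H3.
elim: j H2 H3 => [|j IH] H2 H3; first lia.
case: (ltnP i j.+1) => H4; last by have -> : i = j.+1 by lia.
have := IH (ltac:(lia)) (ltac:(lia)); have := Hm j (ltac:(lia)); rewrite /A; lia.
Qed.

Lemma A_Dop k j : 1 <= j <= m -> A (Dop k Q) j = A Q j + (j == k).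
Proof.
move=> Hj; rewrite {1}(quasi_mkQ HQ) Dop_mkQ /A qent_mkQ; try lia.
have -> : 1 + j - 1 = j by lia.
  lia.
Qed.

Lemma Dop_quasi k : D_defined m k Q -> is_quasi_array m (Dop k Q).
Proof.
move=> [Hk Hd]; rewrite (quasi_mkQ HQ) Dop_mkQ; apply: mkQ_quasi.
  move=> j Hj; have := A_pos Hj; lia.
move=> j Hj; have := A_mono (i := j) (j := j.+1) (ltac:(lia)) (ltac:(lia)) (ltac:(lia)).
case: Hd => [->|[Hk' Hlt]].
  have -> : (j == m) = false by apply/eqP; lia.
  by case: (j.+1 == m); lia.
case: (eqVneq j k) => [->|Hjk].
  have -> : (k.+1 == k) = false by apply/eqP; lia.
  rewrite /A /= in Hlt *; lia.
by case: (j.+1 == k) => /=; lia.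
Qed.

End Quasi.

Definition cells (sg : seq nat) : seq (nat * nat) :=
  flatten [seq [seq (r, c) | r <- rev (iota 0 (size sg)) & in_diag sg r c]
          | c <- iota 0 (sumn sg)].

Definition cell_lt (x y : nat * nat) : bool :=
  (x.2 < y.2) || ((x.2 == y.2) && (y.1 < x.1)).

Lemma cell_lt_irr x : cell_lt x x = false.
Proof. rewrite /cell_lt ltnn eqxx /=; lia. Qed.

Lemma cell_lt_asym x y : cell_lt x y -> cell_lt y x -> False.
Proof. rewrite /cell_lt => /orP [H|/andP [/eqP H1 H2]] /orP [H'|/andP [/eqP H1' H2']]; lia. Qed.

Lemma col_cells sg T : col_reading sg T = [seq tval sg T x.1 x.2 | x <- cells sg].
Proof.
rewrite /col_reading /cells map_flatten -map_comp; congr flatten.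
by apply: eq_map => c /=; rewrite -map_comp.
Qed.

Definition valQ (Q : seq (seq nat)) (x : nat * nat) := A Q (x.1 + x.2).+1 + x.1.

Lemma cells_pairwise sg : pairwise cell_lt (cells sg).
Proof.
rewrite /cells.
have Hcol : forall c, pairwise cell_lt [seq (r, c) | r <- rev (iota 0 (size sg)) & in_diag sg r c].
  move=> c; rewrite pairwise_map; apply: pairwise_filter.
  apply/(pairwiseP 0) => i j; rewrite !inE size_rev size_iota => Hi Hj Hij.
  rewrite /relpre /cell_lt /= !nth_rev ?size_iota // !nth_iota; try lia.
suff: forall k c0, pairwise cell_lt (flatten [seq [seq (r, c) | r <- rev (iota 0 (size sg)) & in_diag sg r c] | c <- iota c0 k]) by apply.
elim=> [|k IH] c0 //=.
rewrite pairwise_cat Hcol IH !andbT; apply/allrelP => x y.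
move=> /mapP [r _ ->] /flatten_mapP [c]; rewrite mem_iota => Hc /mapP [r' _ ->].
rewrite /cell_lt /=; lia.
Qed.

Lemma cells_uniq sg : uniq (cells sg).
Proof. apply: pairwise_uniq (cells_pairwise sg); exact: cell_lt_irr. Qed.

Section Cells.
Variables (m : nat) (sg : seq nat).
Hypothesis Hc : is_composition m sg.

Lemma mem_cells r c : ((r, c) \in cells sg) = in_diag sg r c.
Proof.
apply/idP/idP.
  by move=> /flatten_mapP [c' _] /mapP [r' +] [-> ->]; rewrite mem_filter => /andP [].
move=> H; have [? ? ? ? ?] := in_diagE Hc H.
apply/flatten_mapP; exists c.
  rewrite mem_iota; case: Hc => _ ->; lia.
apply/mapP; exists r => //; rewrite mem_filter H mem_rev mem_iota; lia.
Qed.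

Lemma cells_diag x : x \in cells sg -> in_diag sg x.1 x.2.
Proof. by case: x => r c; rewrite mem_cells. Qed.

Lemma tval_pi Q r c : is_quasi_array m Q -> in_diag sg r c ->
  tval sg (pi_sigma sg Q) r c = A Q (r + c).+1 + r.
Proof.
move=> HQ H; have [? ? ? ? ?] := in_diagE Hc H.
have Hrs := rowstart_S Hc (ltnW (ltac:(assumption) : r < size sg)).
have HSs := S_succ sg r.
rewrite /tval /pi_sigma (nth_map 0) ?size_iota // nth_iota // add0n.
rewrite (nth_map 0) ?size_iota; last lia.
rewrite nth_iota; last lia.
rewrite add0n subnKC; last lia.
case: HQ => _ _ _ _ Hf; rewrite Hf; try lia.
rewrite /A; have -> : r.+1 + c.+1 - 1 = (r + c).+1 by lia.
lia.
Qed.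

Lemma col_pi Q : is_quasi_array m Q ->
  col_reading sg (pi_sigma sg Q) = [seq valQ Q x | x <- cells sg].
Proof.
move=> HQ; rewrite col_cells; apply/eq_in_map => x /cells_diag H.
by rewrite tval_pi.
Qed.

Lemma cells_before x y : x \in cells sg -> y \in cells sg -> cell_lt x y ->
  index x (cells sg) < index y (cells sg).
Proof.
move=> Hx Hy Hxy; case: (ltngtP (index x (cells sg)) (index y (cells sg))) => // H.
  move/(pairwiseP (0,0)): (cells_pairwise sg) => /(_ (index y (cells sg)) (index x (cells sg))).
  rewrite !inE !index_mem !nth_index // => /(_ Hy Hx H).
  by move/(cell_lt_asym Hxy).
have : nth (0,0) (cells sg) (index x (cells sg)) = nth (0,0) (cells sg) (index y (cells sg)) by rewrite H.
by rewrite !nth_index // => E; move: Hxy; rewrite E cell_lt_irr.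
Qed.

End Cells.

Lemma subseq2P (x y : nat) s : subseq [:: x; y] s ->
  exists p q, [/\ p < q, q < size s, nth 0 s p = x & nth 0 s q = y].
Proof.
elim: s => [|z s IH] //=.
case: eqP => [<-|_].
  rewrite sub1seq => Hy; exists 0, (index y s).+1; split => //=.
  - by rewrite ltnS index_mem.
  - by rewrite nth_index.
move=> /IH [p [q [H1 H2 H3 H4]]]; exists p.+1, q.+1; split => //.
Qed.

Lemma subseq2I s p q : p < q -> q < size s -> subseq [:: nth 0 s p; nth 0 s q] s.
Proof.
move=> H1 H2.
have := @cat_subseq _ [:: nth 0 s p] [:: nth 0 s q] (take q s) (drop q s).
rewrite cat_take_drop /=; apply; rewrite sub1seq.
  rewrite -(nth_take 0 H1); apply: mem_nth; rewrite size_take H2 //.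
have -> : nth 0 s q = nth 0 (drop q s) 0 by rewrite nth_drop addn0.
apply: mem_nth. by rewrite size_drop subn_gt0.
Qed.

Lemma first_idx (s : seq nat) x p : p < size s -> nth 0 s p = x ->
  (forall j, j < p -> nth 0 s j != x) -> index x s = p.
Proof.
move=> Hp Hx Hb; have Hin : x \in s by rewrite -Hx mem_nth.
case: (ltngtP (index x s) p) => // H.
  by move: (Hb _ H); rewrite nth_index // eqxx.
by move: (before_find 0 H); rewrite Hx /= eqxx.
Qed.

Lemma lastpos_eq (s : seq nat) x q : q < size s -> nth 0 s q = x ->
  (forall j, q < j < size s -> nth 0 s j != x) -> size s - (index x (rev s)).+1 = q.
Proof.
move=> Hq Hx Hb.
suff -> : index x (rev s) = size s - q.+1 by lia.
apply: first_idx; rewrite ?size_rev; try lia.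
  rewrite nth_rev; last lia.
  by have -> : size s - (size s - q.+1).+1 = q by lia.
move=> j Hj; rewrite nth_rev; last lia.
apply: Hb; lia.
Qed.

Lemma lastpos_spec (s : seq nat) x q : x \in s -> q = size s - (index x (rev s)).+1 ->
  [/\ q < size s, nth 0 s q = x & forall j, q < j < size s -> nth 0 s j != x].
Proof.
move=> Hin ->.
have Hr : x \in rev s by rewrite mem_rev.
have Hi := Hr; rewrite -index_mem size_rev in Hi.
split.
- move: Hi; set n := size s; set k := index x (rev s); lia.
- by rewrite -nth_rev ?nth_index.
move=> j Hj.
have Hj' : size s - j.+1 < index x (rev s) by move: Hi Hj; set n := size s; set k := index x (rev s); lia.
move: (before_find 0 Hj'); rewrite nth_rev; last lia.
have -> : size s - (size s - j.+1).+1 = j by lia.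
by move=> /= ->.
Qed.

Lemma set_nth_map (T : eqType) (L : seq T) (f f' : T -> nat) q d :
  uniq L -> q < size L ->
  (forall x, x \in L -> f' x = f x + (x == nth d L q)) ->
  set_nth 0 [seq f x | x <- L] q (f (nth d L q)).+1 = [seq f' x | x <- L].
Proof.
move=> Hu Hq Hf; apply: (@eq_from_nth _ 0).
  by rewrite size_set_nth !size_map; lia.
move=> i; rewrite size_set_nth size_map => Hi.
have Hi' : i < size L by lia.
rewrite nth_set_nth /= !(nth_map d) // Hf ?mem_nth // nth_uniq //.
by case: eqP => [->|]; lia.
Qed.

Section Edge.
Variables (m : nat) (sg : seq nat) (Q : seq (seq nat)).
Hypothesis Hc : is_composition m sg.
Hypothesis HQ : is_quasi_array m Q.

Local Notation L := (cells sg).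

Lemma diag_le_m r c : in_diag sg r c -> (r + c).+1 <= m.
Proof. by move=> /(in_diagE Hc) [? ? ? ? ?]; lia. Qed.

Lemma valQ_Dop x y : x \in L -> y \in L ->
  valQ (Dop (y.1 + y.2).+1 Q) x = valQ Q x + (x == y).
Proof.
case: x => rx cx; case: y => ry cy; rewrite !(mem_cells Hc) => Hx Hy.
rewrite /valQ /= (A_Dop HQ) //; last by have := diag_le_m Hx; lia.
have -> : ((rx + cx).+1 == (ry + cy).+1) = ((rx, cx) == (ry, cy)).
  apply/eqP/eqP => [[] /(diag_uniq Hc Hx Hy) [-> ->] //|[-> ->] //].
by rewrite addnAC.
Qed.

Lemma nthL_in q : q < size L -> nth (0,0) L q \in L.
Proof. exact: mem_nth. Qed.

Lemma L_lt p q : p < q -> q < size L -> cell_lt (nth (0,0) L p) (nth (0,0) L q).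
Proof.
move=> H1 H2; move/(pairwiseP (0,0)): (cells_pairwise sg); apply => //; rewrite inE; lia.
Qed.

Lemma fop_D k : D_defined m k Q -> exists r, r < size sg /\
  fop (A Q k + r) [seq valQ Q x | x <- L] = Some [seq valQ (Dop k Q) x | x <- L].
Proof.
move=> [Hk Hd].
have Hlt : k < m -> A Q k < A Q k.+1.
  by case: Hd => [->|[_ H]]; [lia | move=> _; exact H].
have [r [Hr Hdiag]] := diag_exists Hc (ltac:(lia) : k.-1 < m).
set c := k.-1 - r in Hdiag.
have Hrc : r + c = k.-1 by rewrite /c; lia.
have Hk1 : (r + c).+1 = k by lia.
have HrL := in_diagE Hc Hdiag; case: HrL => HrL _ _ _ _.
exists r; split => //.
set v := A Q k + r.
have Hval : valQ Q (r, c) = v by rewrite /valQ /= Hk1.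
have Hmem : (r, c) \in L by rewrite (mem_cells Hc).
have V : forall y, y \in L -> valQ Q y = v -> y.1 = r /\ y.1 + y.2 <= k.-1.
  case=> r' c'; rewrite (mem_cells Hc) /valQ /v /= => Hy Hv.
  have Hym := diag_le_m Hy.
  case: (ltngtP (r' + c') k.-1) => H.
  - have Hle := diag_row_le Hc Hy Hdiag (ltac:(lia)).
    have := A_mono HQ (i := (r' + c').+1) (j := k) (ltac:(lia)) (ltac:(lia)) (ltac:(lia)).
    lia.
  - have Hle := diag_row_le Hc Hdiag Hy (ltac:(lia)).
    have := Hlt (ltac:(lia)).
    have := A_mono HQ (i := k.+1) (j := (r' + c').+1) (ltac:(lia)) (ltac:(lia)) (ltac:(lia)).
    lia.
  - have := diag_uniq Hc Hy Hdiag (ltac:(lia)); lia.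
have Hin : v \in [seq valQ Q x | x <- L] by apply/mapP; exists (r, c).
have Hns : ~~ subseq [:: v.+1; v] [seq valQ Q x | x <- L].
  apply/negP => /subseq2P [p [q [Hpq Hq Hp' Hq']]].
  move: Hq Hp' Hq'; rewrite size_map => Hq.
  rewrite !(nth_map (0,0)); try lia.
  have Hxy := L_lt Hpq Hq.
  have Hx := nthL_in (ltac:(lia) : p < size L).
  have Hy := nthL_in Hq.
  move=> Hvx Hvy.
  have [Vy1 Vy2] := V _ Hy Hvy.
  move: Hxy Hx Hy Hvx Hvy Vy1 Vy2.
  case: (nth (0,0) L p) => rx cx; case: (nth (0,0) L q) => ry cy.
  rewrite !(mem_cells Hc) /cell_lt /valQ /= => Hxy Hx Hy Hvx Hvy Vy1 Vy2.
  have Hxm := diag_le_m Hx; have Hym := diag_le_m Hy.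
  case/orP: Hxy => [Hlt'|/andP [/eqP Heq Hrr]].
  - case: (ltnP ry rx) => Hr'.
      have := col_le Hc Hx Hy Hr'; lia.
    have := A_mono HQ (i := (rx + cx).+1) (j := (ry + cy).+1) (ltac:(lia)) (ltac:(lia)) (ltac:(lia)).
    lia.
  - have := col_le Hc Hx Hdiag (ltac:(lia)) => Hcc.
    have := Hlt (ltac:(lia)).
    have := A_mono HQ (i := k.+1) (j := (rx + cx).+1) (ltac:(lia)) (ltac:(lia)) (ltac:(lia)).
    lia.
set q0 := index (r, c) L.
have Hq0 : q0 < size L by rewrite index_mem.
have Hnq0 : nth (0,0) L q0 = (r, c) by rewrite nth_index.
have Hlast : size [seq valQ Q x | x <- L] - (index v (rev [seq valQ Q x | x <- L])).+1 = q0.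
  apply: lastpos_eq; rewrite ?size_map //.
    by rewrite (nth_map (0,0)) // Hnq0.
  move=> j Hj; rewrite (nth_map (0,0)); last lia.
  have Hj' : j < size L by lia.
  have Hxy := L_lt (ltac:(lia) : q0 < j) Hj'.
  have Hy := nthL_in Hj'.
  apply/eqP => Hv; have [Vy1 Vy2] := V _ Hy Hv.
  move: Hxy Vy1 Vy2; rewrite Hnq0; case: (nth (0,0) L j) => ry cy.
  rewrite /cell_lt /= => /orP [?|/andP [/eqP ? ?]]; lia.
rewrite /fop (negbTE Hns) Hin /= Hlast.
congr Some.
have -> : v.+1 = (valQ Q (nth (0,0) L q0)).+1 by rewrite Hnq0 Hval.
apply: set_nth_map => //; first exact: cells_uniq.
move=> x Hx; rewrite Hnq0 -Hk1.
exact: (valQ_Dop Hx Hmem).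
Qed.

Lemma fop_inv i w' : fop i [seq valQ Q x | x <- L] = Some w' ->
  exists k, D_defined m k Q /\ w' = [seq valQ (Dop k Q) x | x <- L].
Proof.
rewrite /fop; case: ifP => // /norP [Hns /negbNE Hin] [<-].
set w := [seq valQ Q x | x <- L] in Hns Hin *.
set q := size w - (index i (rev w)).+1.
have [Hq Hnth Hafter] := lastpos_spec Hin (erefl q).
have HwL : size w = size L by rewrite size_map.
have HqL : q < size L by rewrite -HwL.
have Hy := nthL_in HqL.
have Hvy : valQ Q (nth (0,0) L q) = i by rewrite -Hnth (nth_map (0,0)).
have Hidx : index (nth (0,0) L q) L = q by rewrite index_uniq // cells_uniq.
move: Hy Hvy Hidx; case Ey: (nth (0,0) L q) => [ry cy] Hy Hvy Hidx.
have Hdy : in_diag sg ry cy by rewrite -(mem_cells Hc).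
have Hym := diag_le_m Hdy.
exists (ry + cy).+1; split; last first.
  rewrite -Hvy; have -> : (ry + cy).+1 = ((ry, cy).1 + (ry, cy).2).+1 by [].
  rewrite -Ey; apply: set_nth_map => //; first exact: cells_uniq.
  by move=> x Hx; rewrite Ey; apply: valQ_Dop => //; rewrite -Ey.
split; first lia.
case: (ltnP (ry + cy).+1 m) => Hkm; last by left; lia.
right; split => //.
case: (ltnP (A Q (ry + cy).+1) (A Q (ry + cy).+2)) => // Hge.
exfalso.
have Heq : A Q (ry + cy).+2 = A Q (ry + cy).+1.
  have := A_mono HQ (i := (ry + cy).+1) (j := (ry + cy).+2) (ltac:(lia)) (ltac:(lia)) (ltac:(lia)); lia.
have [rz [Hrz Hdz]] := diag_exists Hc Hkm.
set cz := (ry + cy).+1 - rz in Hdz.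
have Hzm : (rz, cz) \in L by rewrite (mem_cells Hc).
have Hle := diag_row_le Hc Hdy Hdz (ltac:(rewrite /cz; lia)).
move: Hvy; rewrite /valQ /= => Hvy.
case: (ltnP ry rz) => Hr.
- have Hcc := col_le Hc Hdz Hdy Hr.
  have Hlt : cell_lt (rz, cz) (ry, cy) by rewrite /cell_lt /=; apply/orP; right; apply/andP; split; [apply/eqP; rewrite /cz in Hcc *; lia | lia].
  have Hb := cells_before Hzm Hy Hlt.
  rewrite Hidx in Hb.
  have := subseq2I Hb Hq.
  rewrite Hnth (nth_map (0,0)); last lia.
  rewrite nth_index // /valQ /=.
  have -> : (rz + cz).+1 = (ry + cy).+2 by rewrite /cz; lia.
  have -> : A Q (ry + cy).+2 + rz = i.+1 by rewrite /cz in Hcc; lia.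
  by rewrite (negbTE Hns).
- have Hrr : rz = ry by lia.
  have Hlt : cell_lt (ry, cy) (rz, cz) by rewrite /cell_lt /=; apply/orP; left; rewrite /cz; lia.
  have Hb := cells_before Hy Hzm Hlt.
  rewrite Hidx in Hb.
  have := Hafter (index (rz, cz) L) (ltac:(rewrite HwL index_mem Hzm; lia)).
  rewrite (nth_map (0,0)); last by rewrite index_mem.
  rewrite nth_index // /valQ /=.
  have -> : (rz + cz).+1 = (ry + cy).+2 by rewrite /cz; lia.
  by rewrite Heq Hrr Hvy eqxx.
Qed.

End Edge.

Section Main.
Variables (n m : nat) (sg : seq nat).
Hypothesis Hc : is_composition m sg.

Lemma part1 Q : Delta_vertex n m Q -> Gamma_vertex (n + size sg - 1) sg (pi_sigma sg Q).
Proof.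
move=> [HQ Hn].
split; [split|].
- by rewrite size_map size_iota.
- move=> r Hr; rewrite /pi_sigma (nth_map 0) ?size_iota // size_map size_iota.
  by rewrite nth_iota.
- move=> r c H; rewrite (tval_pi Hc HQ H).
  have := diag_le_m Hc H; have := A_pos HQ (j := (r + c).+1); lia.
- move=> r c H1 H2; rewrite (tval_pi Hc HQ H1) (tval_pi Hc HQ H2).
  have := diag_le_m Hc H2.
  have := A_mono HQ (i := (r + c).+1) (j := (r + c.+1).+1); lia.
- move=> r r' c Hr H1 H2; rewrite (tval_pi Hc HQ H1) (tval_pi Hc HQ H2).
  have := diag_le_m Hc H2.
  have := A_mono HQ (i := (r + c).+1) (j := (r' + c).+1); lia.
move=> r c H; rewrite (tval_pi Hc HQ H).
have := diag_le_m Hc H; have [? _ _ _ _] := in_diagE Hc H.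
have := A_mono HQ (i := (r + c).+1) (j := m); rewrite /A; lia.
Qed.

Section Tab.
Variable T : seq (seq nat).
Hypothesis HT : is_qrt sg T.

Lemma row_chain r c k : in_diag sg r c -> in_diag sg r (c + k) ->
  tval sg T r c <= tval sg T r (c + k).
Proof.
case: HT => _ _ _ Hrow _.
move=> H1 H2; elim: k H2 => [|k IH] H2; first by rewrite addn0.
have [? ? ? ? ?] := in_diagE Hc H1; have [? ? ? ? ?] := in_diagE Hc H2.
have H3 : in_diag sg r (c + k) by apply: (in_diagI Hc); lia.
rewrite addnS in H2 *; have := IH H3; have := Hrow r (c + k) H3 H2; lia.
Qed.

Lemma tval_gt r c : in_diag sg r c -> r < tval sg T r c.
Proof.
case: HT => _ _ Hpos _ Hcol.
elim: r c => [|r IH] c H; first exact: Hpos.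
have [Hl H1 H2 H3 H4] := in_diagE Hc H.
have Hrs := rowstart_S Hc (ltnW Hl).
have Hs1 := S_succ sg r.+1.
have Hs0 := S_succ sg r.
have Hp0 := nth_pos Hc (ltac:(lia) : r < size sg).
have Hp1 := nth_pos Hc Hl.
set c0 := rowstart sg r.+1.
have Hd0 : in_diag sg r c0 by apply: (in_diagI Hc); rewrite /c0; lia.
have Hd1 : in_diag sg r.+1 c0 by apply: (in_diagI Hc); rewrite /c0; lia.
have := IH _ Hd0; have := Hcol r r.+1 c0 (ltnSn r) Hd0 Hd1.
have := row_chain (k := c - c0) Hd1; rewrite subnKC; last by rewrite /c0; lia.
move=> /(_ H); lia.
Qed.

Definition rowof d := find (fun r => (r <= d) && in_diag sg r (d - r)) (iota 0 (size sg)).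

Lemma rowof_spec d : d < m -> rowof d <= d /\ in_diag sg (rowof d) (d - rowof d).
Proof.
move=> Hd; have [r [Hr Hdg]] := diag_exists Hc Hd.
have [Hl _ _ _ _] := in_diagE Hc Hdg.
have Hh : has (fun r => (r <= d) && in_diag sg r (d - r)) (iota 0 (size sg)).
  by apply/hasP; exists r; rewrite ?mem_iota ?Hr ?Hdg //; lia.
have := nth_find 0 Hh; rewrite -/(rowof d) nth_iota ?add0n => [/andP [] //|].
by move: Hh; rewrite has_find size_iota.
Qed.

Definition aT k := tval sg T (rowof k.-1) (k.-1 - rowof k.-1) - rowof k.-1.

Lemma aT_cell r c : in_diag sg r c -> aT (r + c).+1 = tval sg T r c - r.
Proof.
move=> H; have Hm := diag_le_m Hc H.
have [H1 H2] := rowof_spec (ltac:(lia) : r + c < m).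
have [E1 E2] := diag_uniq Hc H2 H (ltac:(lia)).
rewrite /aT /=; rewrite E1. have -> : r + c - r = c by lia. by [].
Qed.

Lemma aT_pos j : 1 <= j <= m -> 0 < aT j.
Proof.
move=> Hj; have [H1 H2] := rowof_spec (ltac:(lia) : j.-1 < m).
have := tval_gt H2; rewrite /aT; lia.
Qed.

Lemma aT_mono j : 1 <= j < m -> aT j <= aT j.+1.
Proof.
move=> Hj.
have [H1 H2] := rowof_spec (ltac:(lia) : j.-1 < m).
have [H3 H4] := rowof_spec (ltac:(lia) : j < m).
have E1 := aT_cell H2; have E2 := aT_cell H4.
have -> : aT j = aT (rowof j.-1 + (j.-1 - rowof j.-1)).+1 by congr aT; lia.
have -> : aT j.+1 = aT (rowof j + (j - rowof j)).+1 by congr aT; lia.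
rewrite E1 E2.
have := tval_gt H2; have := tval_gt H4.
have Hle := diag_row_le Hc H2 H4 (ltac:(lia)).
move: (rowof j.-1) (rowof j) H1 H2 H3 H4 Hle => r1 r2 H1 H2 H3 H4 Hle.
case: HT => _ _ _ Hrow Hcol.
case: (ltnP r1 r2) => Hlt.
  have Hcc := col_le Hc H4 H2 Hlt.
  have Hc' : j - r2 = j.-1 - r1 by lia.
  have := Hcol _ _ _ Hlt H2; rewrite -Hc' => /(_ H4); lia.
have Hr : r1 = r2 by lia.
subst r2.
have Hc' : j - r1 = (j.-1 - r1).+1 by lia.
have := Hrow _ _ H2; rewrite -Hc' => /(_ H4); lia.
Qed.

Lemma pi_aT : pi_sigma sg (mkQ m aT) = T.
Proof.
have HQ := mkQ_quasi aT_pos aT_mono.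
case: HT => Hs Hsz _ _ _.
apply: (@eq_from_nth _ [::]); first by rewrite size_map size_iota Hs.
move=> r; rewrite size_map size_iota => Hr.
have Hrow : nth [::] (pi_sigma sg (mkQ m aT)) r =
   [seq qent (mkQ m aT) r.+1 (rowstart sg r + j).+1 | j <- iota 0 (nth 0 sg r)].
  by rewrite /pi_sigma (nth_map 0) ?size_iota // nth_iota.
apply: (@eq_from_nth _ 0); first by rewrite Hrow size_map size_iota Hsz.
move=> j; rewrite Hrow size_map size_iota => Hj.
have Hd : in_diag sg r (rowstart sg r + j).
  by rewrite /in_diag Hr /=; apply/andP; split; lia.
have := tval_pi Hc HQ Hd; rewrite /tval addKn Hrow => ->.
have Hm := diag_le_m Hc Hd.
rewrite /A qent_mkQ; last lia; last lia.
have -> : 1 + (r + (rowstart sg r + j)).+1 - 1 = (r + (rowstart sg r + j)).+1 by lia.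
rewrite aT_cell // /tval addKn.
have := tval_gt Hd; rewrite /tval addKn; lia.
Qed.

Lemma uniq_aT Q : is_quasi_array m Q -> pi_sigma sg Q = T -> Q = mkQ m aT.
Proof.
move=> HQ HpT; rewrite (quasi_mkQ HQ); apply: mkQ_ext => j Hj.
have [H1 H2] := rowof_spec (ltac:(lia) : j.-1 < m).
have := aT_cell H2; rewrite -HpT (tval_pi Hc HQ H2).
have -> : (rowof j.-1 + (j.-1 - rowof j.-1)).+1 = j by lia.
lia.
Qed.

End Tab.

Lemma A_ext Q1 Q2 : is_quasi_array m Q1 -> is_quasi_array m Q2 ->
  [seq valQ Q1 x | x <- cells sg] = [seq valQ Q2 x | x <- cells sg] -> Q1 = Q2.
Proof.
move=> H1 H2 /eq_in_map E.
rewrite (quasi_mkQ H1) (quasi_mkQ H2); apply: mkQ_ext => j Hj.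
have [r [Hr Hd]] := diag_exists Hc (ltac:(lia) : j.-1 < m).
have := E (r, j.-1 - r); rewrite (mem_cells Hc) /valQ /= => /(_ Hd).
have -> : (r + (j.-1 - r)).+1 = j by lia.
lia.
Qed.

End Main.

Unset Implicit Arguments.

Theorem theorem4p5 (n m : nat) (sigma : seq nat) :
  0 < n -> 0 < m -> is_composition m sigma ->
  let N := n + size sigma - 1 in
  (* Phi_sigma maps vertices to vertices *)
  (forall Q, Delta_vertex n m Q -> Gamma_vertex N sigma (pi_sigma sigma Q)) /\
  (* T |-> bar T is well defined (unique quasi-array of size m with
     pi_sigma = T) and lands in Delta(T_n, m) *)
  (forall T, Gamma_vertex N sigma T ->
     (exists! Q, is_quasi_array m Q /\ pi_sigma sigma Q = T) /\
     (forall Q, is_quasi_array m Q -> pi_sigma sigma Q = T -> Delta_vertex n m Q)) /\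
  (* edges correspond (unlabelled directed graphs) *)
  (forall Q Q', Delta_vertex n m Q -> Delta_vertex n m Q' ->
     (Delta_edge n m Q Q' <-> Gamma_edge N sigma (pi_sigma sigma Q) (pi_sigma sigma Q'))).
Proof.
move=> Hn Hm Hc N; split; [|split].
- exact: part1.
- move=> T [HT Hb]; split.
    exists (mkQ m (aT sigma T)); split.
      split; [exact: mkQ_quasi (aT_pos Hc HT) (aT_mono Hc HT) | exact: pi_aT].
    by move=> Q [HQ HpT]; rewrite (uniq_aT Hc HQ HpT).
  move=> Q HQ HpT; split => //.
  have [r [Hr Hd]] := diag_exists Hc (ltac:(lia) : m.-1 < m).
  have Hl := last_row Hc Hd (ltac:(lia)).
  have := Hb _ _ Hd; rewrite -HpT (tval_pi Hc HQ Hd).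
  have -> : (r + (m.-1 - r)).+1 = m by lia.
  rewrite /N /A; lia.
move=> Q Q' [HQ HnQ] [HQ' HnQ']; split.
- move=> [k [Hk [HD _]]].
  split; first exact: (part1 Hc (conj HQ' HnQ')).
  have [r [Hr Hf]] := fop_D Hc HQ Hk.
  exists (A Q k + r); split.
    have [Hk1 _] := Hk; have := A_pos HQ Hk1.
    have := A_Dop HQ k Hk1; rewrite HD eqxx.
    have := A_mono HQ' (i := k) (j := m); rewrite /A in HnQ' *; lia.
  by rewrite !(col_pi Hc) // -HD.
- move=> [Hv [i [Hi Hf]]].
  move: Hf; rewrite !(col_pi Hc) // => /(fop_inv Hc HQ) [k [Hk Hw]].
  exists k; split => //; split; last by split.
  exact: (A_ext Hc (Dop_quasi HQ Hk) HQ' (esym Hw)).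
Qed.
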